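(* Let $r\in[n]$ and $\mu>0$ with $n\ge\mu r$. There is a universal constant $C>0$ such that for all sufficiently large $n$ and every $\delta$ with $\sqrt{4/(n-1)}<\delta<\sqrt{\mu r/n}$, $$\log\mathcal{M}(\mathbb{K}_{r,\mu},d_{2,\infty},\delta)\le C\,\frac{r^2}{\delta^2}\log n.$$
   Context: $\mathbb{K}_{r,\mu}=\{\boldsymbol{U}\in\mathbb{R}^{n\times r}:\boldsymbol{U}^\top\boldsymbol{U}=\boldsymbol{I}_r,\ \|\boldsymbol{U}\|_{2,\infty}\le\sqrt{r\mu/n}\}$, where $\|\cdot\|_{2,\infty}$ is the maximum row Euclidean norm. $d_{2,\infty}(\boldsymbol{U}_1,\boldsymbol{U}_2)=\min_{\boldsymbol{\Gamma}\in\mathbb{O}_r}\|\boldsymbol{U}_2-\boldsymbol{U}_1\boldsymbol{\Gamma}\|_{2,\infty}$. $\mathcal{M}(\mathbb{K},\rho,\delta)$ is the $\delta$-packing number: the largest cardinality of a subset of $\mathbb{K}$ whose distinct elements are at $\rho$-distance greater than $\delta$. *)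

(* Defs.v *)
From HB Require Import structures.
From mathcomp Require Import all_boot all_order all_algebra.
From mathcomp Require Import all_classical all_reals.
From mathcomp Require Import exp.
Set Implicit Arguments. Unset Strict Implicit. Unset Printing Implicit Defensive.
Import Order.TTheory GRing.Theory Num.Theory.
Local Open Scope classical_set_scope.
Local Open Scope ring_scope.

Section Defs.
Variable R : realType.

Definition row_norm (n r : nat) (U : 'M[R]_(n, r)) (i : 'I_n) : R :=
  Num.sqrt (\sum_(j < r) U i j ^+ 2).

Definition norm2inf (n r : nat) (U : 'M[R]_(n, r)) : R :=
  \big[Order.max/0]_(i < n) row_norm U i.

Definition orthogonal_mx (r : nat) : set 'M[R]_r :=
  [set G | G^T *m G = 1%:M].

Definition Kset (n r : nat) (mu : R) : set 'M[R]_(n, r) :=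
  [set U | U^T *m U = 1%:M /\ norm2inf U <= Num.sqrt (r%:R * mu / n%:R)].

Definition d2inf (n r : nat) (U1 U2 : 'M[R]_(n, r)) : R :=
  inf [set norm2inf (U2 - U1 *m G) | G in @orthogonal_mx r].

Definition is_packing (T : eqType) (K : set T) (rho : T -> T -> R) (delta : R)
  (S : seq T) : Prop :=
  uniq S /\ (forall U, U \in S -> K U) /\
  (forall U V, U \in S -> V \in S -> U != V -> delta < rho U V).

End Defs.

(* Main.v *)
Require Import Defs.
From HB Require Import structures.
From mathcomp Require Import all_boot all_order all_algebra.
From mathcomp Require Import all_classical all_reals.
From mathcomp Require Import exp.
From mathcomp Require Import ring lra zify.
From Stdlib Require Import Lia.
Set Implicit Arguments. Unset Strict Implicit. Unset Printing Implicit Defensive.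
Import Order.TTheory GRing.Theory Num.Theory.
Local Open Scope ring_scope.

Section Aux.
Variable R : realType.

Definition rowsq (n r : nat) (U : 'M[R]_(n, r)) (i : 'I_n) : R :=
  \sum_(j < r) U i j ^+ 2.

Lemma entry_le1 n r (U : 'M[R]_(n, r)) i j :
  U^T *m U = 1%:M -> U i j ^+ 2 <= 1.
Proof.
move=> H.
have : (U^T *m U) j j = 1 by rewrite H mxE eqxx.
rewrite mxE => <-.
rewrite (bigD1 i) //= mxE -expr2 lerDl.
by apply: sumr_ge0 => k _; rewrite mxE -expr2 sqr_ge0.
Qed.

Lemma total_sq n r (U : 'M[R]_(n, r)) :
  U^T *m U = 1%:M -> \sum_i rowsq U i = r%:R.
Proof.
move=> H; rewrite /rowsq exchange_big /=.
rewrite -[in RHS](card_ord r) -sumr_const; apply: eq_bigr => j _.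
have : (U^T *m U) j j = 1 by rewrite H mxE eqxx.
rewrite mxE => <-; apply: eq_bigr => k _; by rewrite mxE expr2.
Qed.

Lemma sq_le1 (x : R) : x ^+ 2 <= 1 -> -1 <= x <= 1.
Proof. move=> h; apply/andP; split; nra. Qed.

Definition bin (n : nat) (x : R) : 'I_n.+1 :=
  inord (Num.truncn ((x + 1) * n%:R / 2)).

Lemma bin_close n (x y : R) : (0 < n)%N -> x ^+ 2 <= 1 -> y ^+ 2 <= 1 ->
  bin n x = bin n y -> (x - y) ^+ 2 <= 4 / n%:R ^+ 2.
Proof.
move=> n0 hx hy.
have nP : 0 < n%:R :> R by rewrite ltr0n.
move: (sq_le1 hx) (sq_le1 hy) => /andP[x1 x2] /andP[y1 y2].
set a := (x + 1) * n%:R / 2; set b := (y + 1) * n%:R / 2.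
have a0 : 0 <= a by rewrite /a; apply: divr_ge0 => //; apply: mulr_ge0; lra.
have b0 : 0 <= b by rewrite /b; apply: divr_ge0 => //; apply: mulr_ge0; lra.
have an : a <= n%:R by rewrite /a ler_pdivrMr //; nra.
have bn : b <= n%:R by rewrite /b ler_pdivrMr //; nra.
have ta : (Num.truncn a < n.+1)%N by rewrite truncn_lt_nat // (le_lt_trans an) // ltr_nat.
have tb : (Num.truncn b < n.+1)%N by rewrite truncn_lt_nat // (le_lt_trans bn) // ltr_nat.
rewrite /bin -/a -/b => /(congr1 val) /=; rewrite !inordK // => tab.
move: (truncn_itv a0) (truncn_itv b0); rewrite tab => /andP[h1 h2] /andP[h3 h4].
rewrite -natr1 in h2 h4.
have hab : (a - b) ^+ 2 <= 1 by nra.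
have e : (x - y) = 2 * (a - b) / n%:R.
  rewrite /a /b; field; lra.
have n2 : 0 < n%:R ^+ 2 :> R by rewrite exprn_gt0.
have -> : (x - y) ^+ 2 = (4 * (a - b) ^+ 2) / n%:R ^+ 2.
  rewrite e; field; lra.
apply: ler_wpM2r; first by rewrite invr_ge0 ltW.
nra.
Qed.


Lemma norm2inf_ge0 n r (W : 'M[R]_(n, r)) : 0 <= norm2inf W.
Proof.
rewrite /norm2inf; apply: (big_ind (fun x => 0 <= x)) => //.
  by move=> x y hx hy; rewrite (le_trans hx) // le_max lexx.
by move=> i _; rewrite /row_norm sqrtr_ge0.
Qed.

Lemma norm2inf_le n r (W : 'M[R]_(n, r)) (d : R) : 0 <= d ->
  (forall i, rowsq W i <= d ^+ 2) -> norm2inf W <= d.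
Proof.
move=> d0 h; rewrite /norm2inf; apply: (big_ind (fun x => x <= d)) => //.
  by move=> x y hx hy; rewrite ge_max hx hy.
move=> i _; rewrite /row_norm -(ger0_norm d0) -sqrtr_sqr ler_sqrt ?sqr_ge0 //.
exact: h.
Qed.

Lemma d2inf_le n r (U V : 'M[R]_(n, r)) : d2inf U V <= norm2inf (V - U).
Proof.
have lb : has_lbound [set norm2inf (V - U *m G) | G in @orthogonal_mx R r].
  by exists 0 => x [G _ <-]; apply: norm2inf_ge0.
apply: (ge_inf lb); exists 1%:M; last by rewrite mulmx1.
by rewrite /orthogonal_mx /= trmx1 mulmx1.
Qed.

Lemma rowdist n r (U V : 'M[R]_(n, r)) (d : R) i : (0 < n)%N ->
  r%:R * (4 / n%:R ^+ 2) <= d ^+ 2 ->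
  U^T *m U = 1%:M -> V^T *m V = 1%:M ->
  (d ^+ 2 / 4 < rowsq U i) = (d ^+ 2 / 4 < rowsq V i) ->
  (d ^+ 2 / 4 < rowsq U i -> forall j, bin n (U i j) = bin n (V i j)) ->
  rowsq (V - U) i <= d ^+ 2.
Proof.
move=> n0 hd hU hV e hb.
have -> : rowsq (V - U) i = \sum_j (V i j - U i j) ^+ 2.
  by apply: eq_bigr => j _; rewrite !mxE.
case: (boolP (d ^+ 2 / 4 < rowsq U i)) => hl.
  apply: le_trans hd.
  apply: (@le_trans _ _ (\sum_(j : 'I_r) (4 / n%:R ^+ 2))); last first.
    by rewrite sumr_const card_ord [r%:R * _]mulr_natl.
  apply: ler_sum => j _.
  apply: bin_close => //; try exact: entry_le1.
  by rewrite hb.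
have hl' := hl; rewrite e in hl'.
rewrite -!leNgt in hl hl'.
apply: (@le_trans _ _ (\sum_j (2 * V i j ^+ 2 + 2 * U i j ^+ 2))).
  apply: ler_sum => j _; rewrite -subr_ge0.
  have -> : 2 * V i j ^+ 2 + 2 * U i j ^+ 2 - (V i j - U i j) ^+ 2 = (V i j + U i j) ^+ 2 by ring.
  exact: sqr_ge0.
rewrite big_split /= -!mulr_sumr.
rewrite /rowsq in hl hl'; lra.
Qed.

Lemma count_large n r (U : 'M[R]_(n, r)) (d : R) : 0 < d ->
  U^T *m U = 1%:M ->
  (#|[pred i : 'I_n | (d ^+ 2 / 4 < rowsq U i)%R]| <= Num.truncn (4 * r%:R / d ^+ 2))%N.
Proof.
move=> d0 hU.
have d2 : 0 < d ^+ 2 by rewrite exprn_gt0.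
rewrite truncn_ge_nat; last by apply: divr_ge0 => //; rewrite ?mulr_ge0 // ltW.
rewrite ler_pdivlMr //.
set P := [pred i | _].
have h1 : (d ^+ 2 / 4) *+ #|P| <= \sum_(i in P) rowsq U i.
  by rewrite -sumr_const; apply: ler_sum => i; rewrite inE => /ltW.
have h2 : \sum_(i in P) rowsq U i <= r%:R.
  rewrite -(total_sq hU) [X in _ <= X](bigID (mem P)) /= lerDl.
  by apply: sumr_ge0 => i _; apply: sumr_ge0 => j _; apply: sqr_ge0.
have := le_trans h1 h2; rewrite -mulr_natr; lra.
Qed.


End Aux.

Lemma pad_inj (T : eqType) (s t : seq T) (K : nat) :
  (size s <= K)%N -> (size t <= K)%N ->
  (forall j, (j < K)%N -> nth None (map Some s) j = nth None (map Some t) j) ->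
  s = t.
Proof.
elim: s t K => [|x s IH] [|y t] K //= hs ht h.
- by case: K hs ht h => // K _ _ h; move: (h 0%N isT).
- by case: K hs ht h => // K _ _ h; move: (h 0%N isT).
- case: K hs ht h => // K hs ht h.
  move: (h 0%N isT) => /= [->]; congr (_ :: _).
  by apply: (IH t K) => // j hj; apply: (h j.+1).
Qed.

Lemma nat_bound (n r K : nat) : (2 <= n)%N -> (1 <= r)%N ->
  ((n * n.+1 ^ r).+1 ^ K <= n ^ (4 * r * K))%N.
Proof.
move=> n2 r1.
have h1 : ((n * n.+1 ^ r).+1 <= n.+1 ^ r.+1)%N.
  rewrite expnS; have : (0 < n.+1 ^ r)%N by rewrite expn_gt0.
  set p := (n.+1 ^ r)%N; nia.
have h2 : (n.+1 ^ r.+1 <= (n ^ 2) ^ r.+1)%N by rewrite leq_exp2r //; nia.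
have h3 : ((n ^ 2) ^ r.+1 <= n ^ (4 * r))%N.
  by rewrite -expnM leq_pexp2l //; [lia | lia].
have h := leq_trans h1 (leq_trans h2 h3).
rewrite expnM; elim: K => // k IH; rewrite !expnS leq_mul //.
Qed.

Theorem lemma16 (R : realType) :
  exists C : R, 0 < C /\
  exists N : nat, forall (n r : nat) (mu delta : R),
    (N <= n)%N -> (1 <= r <= n)%N ->
    0 < mu -> mu * r%:R <= n%:R ->
    Num.sqrt (4 / (n%:R - 1)) < delta ->
    delta < Num.sqrt (mu * r%:R / n%:R) ->
    forall S : seq 'M[R]_(n, r),
      @is_packing R _ (@Kset R n r mu) (@d2inf R n r) delta S ->
      ln ((size S)%:R : R) <= C * (r%:R ^+ 2 / delta ^+ 2) * ln (n%:R : R).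
Proof.
exists 16; split; first lra.
exists 2%N => n r mu delta hN /andP[r1 rn] mu0 hmr hd1 hd2 S [hu [hK hsep]].
have n0 : (0 < n)%N by lia.
have nR : (2 <= n%:R :> R) by rewrite (ler_nat R 2 n).
have d0 : 0 < delta := le_lt_trans (sqrtr_ge0 _) hd1.
have hd1' : 4 / (n%:R - 1) < delta ^+ 2.
  by move: hd1; rewrite -[X in _ < X](ger0_norm (ltW d0)) -sqrtr_sqr ltr_sqrt ?exprn_gt0.
have hd : r%:R * (4 / n%:R ^+ 2) <= delta ^+ 2.
  have n1 : 0 < n%:R - 1 :> R by lra.
  move: hd1'; rewrite ltr_pdivrMr // => h.
  have rn' : r%:R <= n%:R :> R by rewrite ler_nat.
  rewrite mulrA ler_pdivrMr ?exprn_gt0 ?ltr0n //; nra.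
set K := Num.truncn (4 * r%:R / delta ^+ 2).
pose sq (U : 'M[R]_(n, r)) := [seq (i, [ffun j => bin n (U i j)]) |
  i <- enum [pred i : 'I_n | (delta ^+ 2 / 4 < rowsq U i)%R]].
pose sig (U : 'M[R]_(n, r)) : {ffun 'I_K -> option ('I_n * {ffun 'I_r -> 'I_n.+1})}
  := [ffun j : 'I_K => nth None (map Some (sq U)) j].
have ortho U : U \in S -> U^T *m U = 1%:M by move=> /hK [].
have szq U : U \in S -> (size (sq U) <= K)%N.
  by move=> US; rewrite size_map -cardE; apply: count_large => //; apply: ortho.
have memq (W : 'M[R]_(n, r)) (i : 'I_n) : ((i, [ffun j => bin n (W i j)]) \in sq W) =
    (delta ^+ 2 / 4 < rowsq W i).
  rewrite mem_map ?mem_enum ?inE //.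
  by move=> a b /(congr1 fst).
have key (W1 W2 : 'M[R]_(n, r)) (i : 'I_n) : sq W1 = sq W2 -> (delta ^+ 2 / 4 < rowsq W1 i) ->
    (delta ^+ 2 / 4 < rowsq W2 i) /\
    [ffun j => bin n (W1 i j)] = [ffun j => bin n (W2 i j)].
  move=> e l1; have : (i, [ffun j => bin n (W1 i j)]) \in sq W2 by rewrite -e memq.
  case/mapP => i'; rewrite mem_enum inE => l2 [ei ->].
  by rewrite ei; split.
have inj : {in S &, injective sig}.
  move=> U V US VS hsig; apply/eqP; apply/negPn/negP => hne.
  have := hsep U V US VS hne.
  suff : d2inf U V <= delta by move=> h1 h2; have := lt_le_trans h2 h1; rewrite ltxx.
  apply: le_trans (d2inf_le U V) _.
  have eq_sq : sq U = sq V.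
    apply: (pad_inj (szq U US) (szq V VS)) => j hj.
    by move/ffunP: hsig => /(_ (Ordinal hj)); rewrite !ffunE.
  apply: norm2inf_le (ltW d0) _ => i; apply: rowdist => //; try exact: ortho.
    apply/idP/idP => h; first exact: (key U V i eq_sq h).1.
    exact: (key V U i (esym eq_sq) h).1.
  move=> h j; move/ffunP: (key U V i eq_sq h).2 => /(_ j).
  by rewrite !ffunE.
have szS : (size S <= (n * n.+1 ^ r).+1 ^ K)%N.
  rewrite -(size_map sig).
  have /card_uniqP <- : uniq (map sig S) by rewrite map_inj_in_uniq.
  apply: leq_trans (max_card _) _.
  by rewrite card_ffun card_option card_prod !card_ffun !card_ord.
have szS' := leq_trans szS (nat_bound K hN r1).
have lnn : 0 <= ln (n%:R : R) by apply: ln_ge0; rewrite (ler_nat R 1 n); lia.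
have hK' : K%:R <= 4 * r%:R / delta ^+ 2.
  rewrite truncn_le; apply: divr_ge0; last exact: sqr_ge0.
  by apply: mulr_ge0.
have bound : (4 * r * K)%N%:R * ln (n%:R : R) <=
    16 * (r%:R ^+ 2 / delta ^+ 2) * ln (n%:R : R).
  apply: (ler_wpM2r lnn); rewrite !natrM.
  have r0 : 0 <= (4 : nat)%:R * r%:R :> R by apply: mulr_ge0.
  apply: le_trans (ler_wpM2l r0 hK') _.
  rewrite le_eqVlt; apply/orP; left; apply/eqP.
  field; exact: lt0r_neq0 d0.
case: (posnP (size S)) => hs.
  rewrite hs ln0 //; apply: mulr_ge0 => //; apply: mulr_ge0 => //.
  apply: divr_ge0; exact: sqr_ge0.
apply: le_trans bound.
rewrite mulr_natl -lnXn ?ltr0n // -natrX ler_ln ?posrE ?ltr0n ?expn_gt0 ?n0 //.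
by rewrite ler_nat.
Qed.
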